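(* Let $n=p^{\alpha}qr$ where $p,q,r$ are distinct primes and $\alpha\geq 1$ is an integer. Then the complement graph $\mathbb{AG}^c(\mathbb{Z}_n)$ of $\mathbb{AG}(\mathbb{Z}_n)$ has no induced cycle of odd length greater than $3$.
   Context: For a commutative ring $R$ with unity, the annihilating-ideal graph $\mathbb{AG}(R)$ is the simple graph whose vertex set is the set of all non-zero ideals of $R$ with non-zero annihilator, two distinct vertices $I,J$ being adjacent if and only if $IJ=0$. $\mathbb{AG}^c(R)$ denotes its complement (same vertex set, two distinct vertices adjacent iff they are not adjacent in $\mathbb{AG}(R)$). An induced cycle is an induced subgraph isomorphic to a cycle. *)

(* Defs.v *)
From mathcomp Require Import all_boot all_algebra.
Set Implicit Arguments. Unset Strict Implicit. Unset Printing Implicit Defensive.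
Import GRing.Theory.
Local Open Scope ring_scope.

Section AnnihilatingIdealGraph.
Variable R : finComNzRingType.

Definition is_ideal (I : {set R}) : Prop :=
  [/\ 0 \in I,
      (forall x y, x \in I -> y \in I -> x + y \in I) &
      (forall a x, x \in I -> a * x \in I)].

(* I J = 0 : the product ideal (generated by all products x*y, x in I,
   y in J) is zero, i.e. every such product is zero. *)
Definition ideal_prod_zero (I J : {set R}) : Prop :=
  forall x y, x \in I -> y \in J -> x * y = 0.

Definition ann (I : {set R}) : {set R} := [set a | [forall x in I, a * x == 0]].

Definition AG_vertex (I : {set R}) : Prop :=
  [/\ is_ideal I, I != [set 0] & ann I != [set 0]].

Definition AG_adj (I J : {set R}) : Prop := I != J /\ ideal_prod_zero I J.
Definition AGc_adj (I J : {set R}) : Prop := I != J /\ ~ AG_adj I J.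

End AnnihilatingIdealGraph.

Definition cycle_adj (k : nat) (i j : 'I_k) : bool :=
  (val j == (val i).+1 %% k)%N || (val i == (val j).+1 %% k)%N.

Definition induced_cycle (T : Type) (V : T -> Prop) (E : T -> T -> Prop)
    (k : nat) (c : 'I_k -> T) : Prop :=
  [/\ injective c, (forall i, V (c i)) &
      (forall i j, E (c i) (c j) <-> cycle_adj i j)].

(* Main.v *)
Require Import Defs.
From mathcomp Require Import all_boot all_algebra.
From mathcomp Require Import zify.
Import GRing.Theory.

Lemma S_mod x k : (x < k)%N -> (x.+1 %% k = if x.+1 == k then 0 else x.+1)%N.
Proof.
move=> xk; case: eqP => [->|ne]; first by rewrite modnn.
by rewrite modn_small //; lia.
Qed.

Lemma cycle_adjE k (i j : 'I_k) :
  cycle_adj i j = [|| (val j == (val i).+1), (val i == (val j).+1),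
                      ((val i).+1 == k) && (val j == 0) |
                      ((val j).+1 == k) && (val i == 0)]%N.
Proof.
rewrite /cycle_adj !S_mod ?ltn_ord //.
case: i j => [i hi] [j hj] /=.
repeat case: eqP => //=; try lia.
Qed.

Lemma comb k (G : 'I_k -> nat) (bq br : 'I_k -> bool) a :
  (4 < k)%N ->
  (forall i j, i != j -> cycle_adj i j = [|| (a < G i + G j)%N, bq i && bq j | br i && br j]) ->
  False.
Proof.
move=> k4 H.
have k0 : (0 < k)%N by lia.
pose i00 := Ordinal k0.
have [u _ Hu] := @arg_maxnP _ i00 xpredT G (erefl true).
pose rot (i : 'I_k) : 'I_k := Ordinal (ltn_pmod (i + u) k0).
have rotadj i j : cycle_adj (rot i) (rot j) = cycle_adj i j.
  have e (x y : 'I_k) : (val (rot y) == (val (rot x)).+1 %% k)%N = (val y == (val x).+1 %% k)%N.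
    rewrite /= -addn1 modnDml addn1 -addSn eqn_modDr modn_small //.
  by rewrite /cycle_adj !e.
have rotinj i j : i != j -> rot i != rot j.
  move=> ij; apply: contraNneq ij => /(congr1 val) /= /eqP.
  by rewrite eqn_modDr !modn_small // => /eqP h; apply: val_inj.
have rot0 : G (rot i00) = G u.
  by congr G; apply/val_inj; rewrite /= add0n modn_small.
pose G' i := G (rot i); pose bq' i := bq (rot i); pose br' i := br (rot i).
have H' i j : i != j -> cycle_adj i j = [|| (a < G' i + G' j)%N, bq' i && bq' j | br' i && br' j].
  by move=> ij; rewrite -rotadj; apply: H; apply: rotinj.
have Hm i : (G' i <= G' i00)%N by rewrite /G' rot0; apply: Hu.
clearbody G' bq' br'.
have h1 : (1 < k)%N by lia.
have h2 : (2 < k)%N by lia.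
have h3 : (3 < k)%N by lia.
pose i1 := Ordinal h1; pose i2 := Ordinal h2; pose i3 := Ordinal h3; pose i4 := Ordinal k4.
have N02 := H' i00 i2 isT; have N03 := H' i00 i3 isT; have N13 := H' i1 i3 isT;
have N24 := H' i2 i4 isT; have E12 := H' i1 i2 isT; have E23 := H' i2 i3 isT;
have E34 := H' i3 i4 isT.
rewrite cycle_adjE /= in N02; rewrite cycle_adjE /= in N03;
rewrite cycle_adjE /= in N13; rewrite cycle_adjE /= in N24;
rewrite cycle_adjE /= in E12; rewrite cycle_adjE /= in E23;
rewrite cycle_adjE /= in E34.
have kf1 : (1 == k) = false by apply/eqP => e; move: (k4); rewrite -e.
have kf2 : (2 == k) = false by apply/eqP => e; move: (k4); rewrite -e.
have kf3 : (3 == k) = false by apply/eqP => e; move: (k4); rewrite -e.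
have kf4 : (4 == k) = false by apply/eqP => e; move: (k4); rewrite -e.
rewrite ?kf1 ?kf2 ?kf3 ?kf4 ?andbF /= in N02 N03 N13 N24 E12 E23 E34.
have g02 : (a < G' i00 + G' i2)%N = false by move: N02; case: (a < _)%N.
have g03 : (a < G' i00 + G' i3)%N = false by move: N03; case: (a < _)%N.
have g12 : (a < G' i1 + G' i2)%N = false.
  apply/negbTE; rewrite -leqNgt; apply: leq_trans (leq_add (Hm i1) (leqnn _)) _.
  by rewrite leqNgt g02.
have g23 : (a < G' i2 + G' i3)%N = false.
  apply/negbTE; rewrite -leqNgt; apply: leq_trans (leq_add (Hm i2) (leqnn _)) _.
  by rewrite leqNgt g03.
have g34 : (a < G' i3 + G' i4)%N = false.
  apply/negbTE; rewrite -leqNgt addnC; apply: leq_trans (leq_add (Hm i4) (leqnn _)) _.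
  by rewrite leqNgt g03.
rewrite g12 in E12; rewrite g23 in E23; rewrite g34 in E34.
move: N13 N24 E12 E23 E34; clear.
case: (bq' i1); case: (bq' i2); case: (bq' i3); case: (bq' i4);
case: (br' i1); case: (br' i2); case: (br' i3); case: (br' i4); by rewrite /= ?orbT ?andbF.
Qed.

Local Open Scope ring_scope.

Lemma adjE (R : finComNzRingType) (I J : {set R}) : I != J ->
  (AGc_adj I J <-> [exists x in I, exists y in J, x * y != 0]).
Proof.
move=> IJ; split.
  case=> _ nadj; case: (boolP [exists x in I, exists y in J, x * y != 0]) => // hne.
  exfalso; apply: nadj; split => // x y xI yJ; apply/eqP.
  move/existsPn: hne => /(_ x); rewrite xI /= => /existsPn /(_ y).
  by rewrite yJ /= negbK.
move=> h; split => //; case=> _ hz.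
move/existsP: h => [x /andP[xI /existsP[y /andP[yJ]]]].
by rewrite hz // eqxx.
Qed.

Lemma Zmul0 (m : nat) (x y : 'Z_m) : (1 < m)%N -> (x * y == 0) = (m %| x * y)%N.
Proof.
move=> m1.
have e : x * y = ((x * y)%N)%:R :> 'Z_m by rewrite natrM !natr_Zp.
by rewrite e -val_eqE /= val_Zp_nat.
Qed.

Definition hv (p a x : nat) : nat := (if x == 0 then 0 else a - logn p x)%N.

Lemma hv_le p a x : (hv p a x <= a)%N.
Proof. by rewrite /hv; case: eqP => // _; apply: leq_subr. Qed.
Local Open Scope nat_scope.

Lemma pa_dvd p a x y : prime p ->
  ~~ (p ^ a %| x * y)%N = (a < hv p a x + hv p a y)%N.
Proof.
move=> pp; rewrite /hv.
case: eqP => [->|/eqP x0]; first by rewrite mul0n dvdn0 /=; have := hv_le p a y; rewrite /hv; lia.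
case: eqP => [->|/eqP y0]; first by rewrite muln0 dvdn0 /=; lia.
rewrite pfactor_dvdn ?muln_gt0 ?lt0n ?x0 ?y0 // lognM ?lt0n //; lia.
Qed.

Lemma ndvd p q r a m : prime p -> prime q -> prime r -> p != q -> p != r -> q != r ->
  ~~ (p ^ a * q * r %| m)%N = [|| ~~ (p ^ a %| m)%N, ~~ (q %| m)%N | ~~ (r %| m)%N].
Proof.
move=> pp qp rp pq pr qr.
have cpq : coprime p q by rewrite prime_coprime // dvdn_prime2.
have cpr : coprime p r by rewrite prime_coprime // dvdn_prime2.
have cqr : coprime q r by rewrite prime_coprime // dvdn_prime2.
rewrite Gauss_dvd; last by rewrite coprimeMl cqr andbT coprimeXl.
rewrite Gauss_dvd; last by rewrite coprimeXl.
by rewrite !negb_and orbA.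
Qed.

Local Open Scope ring_scope.
Definition Gs n p a (X : {set 'Z_n}) := (\max_(x in X) hv p a x)%N.
Definition hasnd n q (X : {set 'Z_n}) := [exists x in X, ~~ (q %| x)%N].

Arguments Gs {n}.
Arguments hasnd {n}.

Lemma key p q r a (X Y : {set 'Z_(p ^ a * q * r)}) :
  prime p -> prime q -> prime r -> p != q -> p != r -> q != r -> (0 < a)%N ->
  [exists x in X, exists y in Y, x * y != 0] =
  [|| (a < Gs p a X + Gs p a Y)%N, hasnd q X && hasnd q Y | hasnd r X && hasnd r Y].
Proof.
move=> pp qp rp pq pr qr a0.
have n1 : (1 < p ^ a * q * r)%N.
  by rewrite (leq_trans (prime_gt1 rp)) // leq_pmull // muln_gt0 expn_gt0 !prime_gt0.
apply/idP/idP.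
  case/existsP => x /andP[xX /existsP[y /andP[yY nz]]].
  rewrite Zmul0 // ndvd // in nz.
  case/or3P: nz => [h|h|h].
  - apply/orP; left; rewrite pa_dvd // in h; apply: leq_trans h _.
    by apply: leq_add; apply: leq_bigmax_cond.
  - rewrite Euclid_dvdM // negb_or in h; case/andP: h => hx hy.
    apply/or3P; apply: Or32; apply/andP; split; apply/existsP;
      [exists x; rewrite xX | exists y; rewrite yY] => //.
  - rewrite Euclid_dvdM // negb_or in h; case/andP: h => hx hy.
    apply/or3P; apply: Or33; apply/andP; split; apply/existsP;
      [exists x; rewrite xX | exists y; rewrite yY] => //.
case/or3P.
- move=> lt.
  have GX : (Gs p a X <= a)%N by apply/bigmax_leqP => i _; apply: hv_le.
  have GY : (Gs p a Y <= a)%N by apply/bigmax_leqP => i _; apply: hv_le.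
  case: (posnP #|X|) => [X0|Xp].
    have : (Gs p a X <= 0)%N by apply/bigmax_leqP => i; rewrite (card0_eq X0).
    move: lt GY; lia.
  case: (posnP #|Y|) => [Y0|Yp].
    have : (Gs p a Y <= 0)%N by apply/bigmax_leqP => i; rewrite (card0_eq Y0).
    move: lt GX; lia.
  have [x xX ex] := eq_bigmax_cond (fun x : 'Z_(p ^ a * q * r) => hv p a x) Xp.
  have [y yY ey] := eq_bigmax_cond (fun x : 'Z_(p ^ a * q * r) => hv p a x) Yp.
  apply/existsP; exists x; rewrite xX; apply/existsP; exists y; rewrite yY /=.
  by rewrite Zmul0 // ndvd // pa_dvd // -ex -ey lt.
- case/andP => /existsP[x /andP[xX hx]] /existsP[y /andP[yY hy]].
  apply/existsP; exists x; rewrite xX; apply/existsP; exists y; rewrite yY /=.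
  by rewrite Zmul0 // ndvd // (Euclid_dvdM _ _ qp) negb_or hx hy orbT.
- case/andP => /existsP[x /andP[xX hx]] /existsP[y /andP[yY hy]].
  apply/existsP; exists x; rewrite xX; apply/existsP; exists y; rewrite yY /=.
  by rewrite Zmul0 // ndvd // (Euclid_dvdM _ _ rp) negb_or hx hy !orbT.
Qed.

Theorem lemma5 (p q r alpha : nat) :
  prime p -> prime q -> prime r -> p != q -> p != r -> q != r -> (0 < alpha)%N ->
  forall (k : nat) (c : 'I_k -> {set 'Z_(p ^ alpha * q * r)}),
    odd k -> (3 < k)%N ->
    ~ induced_cycle (@AG_vertex _) (@AGc_adj _) c.
Proof.
move=> pp qp rp pq pr qr a0 k c ok k3 [inj _ HE].
have k4 : (4 < k)%N.
  have : k != 4%N by apply: contraTneq ok => ->.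
  move: k3; lia.
apply: (@comb k (fun i => Gs p alpha (c i)) (fun i => hasnd q (c i))
          (fun i => hasnd r (c i)) alpha k4).
move=> i j ij.
have cij : c i != c j by rewrite (inj_eq inj).
rewrite -key //.
apply/idP/idP => h.
  exact: (proj1 (@adjE _ _ _ cij) ((HE i j).2 h)).
exact: ((HE i j).1 (proj2 (@adjE _ _ _ cij) h)).
Qed.
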